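(* Let $R$ be a commutative unital ring, $G$ a group and $(\mathcal B_1,\Phi_1)\subseteq(\mathcal B_2,\Phi_2)$ a partial subaction of $G$ on generalized Boolean algebras, $\Phi_k=(\{\mathcal I_{k,t}\},\{\phi_{k,t}\})$. Suppose $\mathcal B_1$ is an ideal of $\mathcal B_2$ and $\mathcal I_{1,g}=\mathcal B_1\cap\mathcal I_{2,g}$ for all $g\in G$. Then $\mathrm{Lc}(R,\mathcal B_1)\rtimes_{\Phi_1}G$ is a two-sided ideal of $\mathrm{Lc}(R,\mathcal B_2)\rtimes_{\Phi_2}G$.
   Context: A generalized Boolean algebra is a distributive relatively complemented lattice with least element $0$; an ideal is a subset closed under finite joins and under meets with arbitrary elements. A partial action $\Phi$ of $G$ on $\mathcal B$: ideals $\mathcal I_t$ and isomorphisms $\phi_t:\mathcal I_{t^{-1}}\to\mathcal I_t$ with $\mathcal I_e=\mathcal B$, $\phi_e=\mathrm{id}$, $\phi_s(\mathcal I_{s^{-1}}\cap\mathcal I_t)=\mathcal I_s\cap\mathcal I_{st}$, $\phi_s\phi_t=\phi_{st}$ where defined. A partial subaction: $\mathcal B_1\subseteq\mathcal B_2$ sub generalized Boolean algebra, $\mathcal I_{1,t}\subseteq\mathcal I_{2,t}$, $\phi_{2,t}$ restricting to $\phi_{1,t}$. $\mathrm{Lc}(R,\mathcal B)$ is the algebra of locally constant compactly supported $R$-valued functions on the Stone space of $\mathcal B$, spanned by idempotents $1_U$; $\mathrm{Lc}(R,\mathcal B)\rtimes_\Phi G=\bigoplus_g\mathrm{Lc}(R,\mathcal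 I_g)\delta_g$ with $U\delta_g:=1_U\delta_g$ and $(U\delta_g)(V\delta_h)=\phi_g(\phi_{g^{-1}}(U)\cap V)\delta_{gh}$. The subalgebra $\mathrm{Lc}(R,\mathcal B_1)\rtimes_{\Phi_1}G$ is identified with the $R$-span of $\{U\delta_g:U\in\mathcal I_{1,g}\}$. *)

(* Defs.v *)
From HB Require Import structures.
From mathcomp Require Import all_boot all_order all_algebra.
From mathcomp Require Import boolp classical_sets fsbigop.
Set Implicit Arguments. Unset Strict Implicit. Unset Printing Implicit Defensive.
Import Order.TTheory GRing.Theory.

Local Open Scope order_scope.

(* Generalized Boolean algebras are MathComp's [cbDistrLatticeType]s:
   distributive lattices with bottom and relative (sectional) complements.
   Sub-structures and ideals are given as predicates on the big algebra.    *)
Section GBA.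
Context {d : Order.disp_t} {B : cbDistrLatticeType d}.

Definition sub_gba (S : pred B) : Prop :=
  [/\ \bot \in S,
      (forall x y, x \in S -> y \in S -> x `|` y \in S),
      (forall x y, x \in S -> y \in S -> x `&` y \in S) &
      (forall x y, x \in S -> y \in S -> x `\` y \in S)].

Definition gba_ideal (S J : pred B) : Prop :=
  [/\ {subset J <= S}, \bot \in J,
      (forall x y, x \in J -> y \in J -> x `|` y \in J) &
      (forall x y, x \in J -> y \in S -> x `&` y \in J)].

End GBA.

(* The isomorphisms phi_t : I_{t^-1} -> I_t are given by total functions
   phi t : B -> B, only their values on I_{t^-1} matter.                    *)
Section PartialAction.
Context {G : groupType} {d : Order.disp_t} {B : cbDistrLatticeType d}.

Definition partial_action (S : pred B) (I : G -> pred B) (phi : G -> B -> B)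
  : Prop :=
  [/\
      (forall t, gba_ideal S (I t)),
      (forall t,
         [/\ (forall x, x \in I (monoid.inv t) -> phi t x \in I t),
             {in I (monoid.inv t) &, injective (phi t)},
             (forall y, y \in I t -> exists2 x, x \in I (monoid.inv t) & phi t x = y),
             {in I (monoid.inv t) &, forall x y, phi t (x `|` y) = phi t x `|` phi t y} &
             {in I (monoid.inv t) &, forall x y, phi t (x `&` y) = phi t x `&` phi t y}]),
      (I monoid.one =i S /\ forall x, x \in S -> phi monoid.one x = x),
      (forall s t y, (y \in I s /\ y \in I (monoid.mul s t)) <->
                     exists x, [/\ x \in I (monoid.inv s), x \in I t & phi s x = y]) &
      (forall s t x, x \in I (monoid.inv t) -> phi t x \in I (monoid.inv s) ->
                     phi s (phi t x) = phi (monoid.mul s t) x)].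

End PartialAction.

(* The Stone space of B: nonzero lattice homomorphisms B -> {false, true}
   preserving \bot (equivalently prime filters).  We represent
   Lc(R,B) x| G by R-valued functions on G x (B -> bool) that vanish off the
   Stone space; U delta_g is the function (k, chi) |-> [k = g] * 1_U(chi). *)
Section CrossedProduct.
Context {R : comPzRingType} {G : groupType} {d : Order.disp_t}
        {B : cbDistrLatticeType d}.

Definition is_char (chi : B -> bool) : Prop :=
  [/\ chi \bot = false,
      (forall x y, chi (x `|` y) = chi x || chi y),
      (forall x y, chi (x `&` y) = chi x && chi y) &
      exists x, chi x].

Definition cpfun := G -> (B -> bool) -> R.

Definition gen (U : B) (g : G) : cpfun :=
  fun k chi => if `[< is_char chi >] && (k == g) && chi U then 1%R else 0%R.

Definition in_cp (I : G -> pred B) (x : cpfun) : Prop :=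
  exists s : seq (R * B * G),
    (forall p, p \in s -> p.1.2 \in I p.2) /\
    x = (fun k chi => \sum_(p <- s) p.1.1 * gen p.1.2 p.2 k chi)%R.

(* the partial action on the Stone space: theta_g : D_{g^-1} -> D_g,
   theta_g(eta) = the filter generated by phi_g(eta /\ I_{g^-1}) *)
Definition theta (I : G -> pred B) (phi : G -> B -> B) (g : G)
  (chi : B -> bool) : B -> bool :=
  fun V => `[< exists W, [/\ W \in I (monoid.inv g), chi W & phi g W <= V] >].

(* multiplication of the crossed product (convolution):
   (a * b)(k, chi) = sum_g a(g, chi) b(g^-1 k, theta_{g^-1} chi);
   it satisfies (U delta_g)(V delta_h) = phi_g(phi_{g^-1}(U) /\ V) delta_{gh} *)
Definition cp_mul (I : G -> pred B) (phi : G -> B -> B) (a b : cpfun)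
  : cpfun :=
  fun k chi =>
    (\sum_(g \in [set: G]) a g chi * b (monoid.mul (monoid.inv g) k) (theta I phi (monoid.inv g) chi))%R.

Definition cp_add (a b : cpfun) : cpfun := fun k chi => (a k chi + b k chi)%R.
Definition cp_opp (a : cpfun) : cpfun := fun k chi => (- a k chi)%R.
Definition cp_zero : cpfun := fun _ _ => 0%R.

Definition two_sided_ideal (A2 A1 : cpfun -> Prop)
  (mul2 : cpfun -> cpfun -> cpfun) : Prop :=
  [/\ (forall x, A1 x -> A2 x),
      A1 cp_zero,
      (forall x y, A1 x -> A1 y -> A1 (cp_add x y)),
      (forall x, A1 x -> A1 (cp_opp x)) &
      (forall x y, A1 x -> A2 y -> A1 (mul2 y x) /\ A1 (mul2 x y))].

End CrossedProduct.

(* Main.v *)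
Require Import Defs.
From HB Require Import structures.
From mathcomp Require Import all_boot all_order all_algebra.
From mathcomp Require Import boolp classical_sets fsbigop.
Set Implicit Arguments. Unset Strict Implicit. Unset Printing Implicit Defensive.
Import Order.TTheory GRing.Theory.
Local Open Scope order_scope.

Section PA.
Context {G : groupType} {d : Order.disp_t} {B : cbDistrLatticeType d}.
Variables (S : pred B) (I : G -> pred B) (phi : G -> B -> B).
Hypothesis PA : partial_action S I phi.

Notation inv := (@monoid.inv G).
Notation mul := (@monoid.mul G).

Lemma invK g : inv (inv g) = g.
Proof. exact: monoid.invgK. Qed.

Lemma pa_map g x : x \in I (inv g) -> phi g x \in I g.
Proof. by case: PA => _ H _ _ _; case: (H g) => H1 _ _ _ _; apply: H1. Qed.

Lemma pa_mapV g x : x \in I g -> phi (inv g) x \in I (inv g).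
Proof. by move=> xI; apply: pa_map; rewrite invK. Qed.

Lemma pa_meet g x y : x \in I (inv g) -> y \in I (inv g) ->
  phi g (x `&` y) = phi g x `&` phi g y.
Proof. by case: PA => _ H _ _ _; case: (H g) => _ _ _ _ Hm; apply: Hm. Qed.

Lemma pa_join g x y : x \in I (inv g) -> y \in I (inv g) ->
  phi g (x `|` y) = phi g x `|` phi g y.
Proof. by case: PA => _ H _ _ _; case: (H g) => _ _ _ Hm _; apply: Hm. Qed.

Lemma pa_ideal_meet g x y : x \in I g -> y \in S -> x `&` y \in I g.
Proof. by case: PA => H _ _ _ _; case: (H g) => _ _ _ Hm; apply: Hm. Qed.

Lemma pa_ideal_sub g x : x \in I g -> x \in S.
Proof. by case: PA => H _ _ _ _; case: (H g) => H1 _ _ _; apply: H1. Qed.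

Lemma pa_ideal_join g x y : x \in I g -> y \in I g -> x `|` y \in I g.
Proof. by case: PA => H _ _ _ _; case: (H g) => _ _ Hm _; apply: Hm. Qed.

Lemma pa_ideal_bot g : \bot \in I g.
Proof. by case: PA => H _ _ _ _; case: (H g). Qed.

Lemma pa_id x : x \in S -> phi monoid.one x = x.
Proof. by case: PA => _ _ [_ H] _ _; apply: H. Qed.

Lemma pa_KV g x : x \in I g -> phi g (phi (inv g) x) = x.
Proof.
move=> xI; case: PA => _ _ _ _ C.
rewrite C ?invK ?pa_mapV // monoid.mulgV pa_id //; exact: pa_ideal_sub xI.
Qed.

Lemma pa_VK g x : x \in I (inv g) -> phi (inv g) (phi g x) = x.
Proof.
move=> xI; have := pa_KV xI; rewrite invK; apply.
Qed.

Lemma pa_mono g x y : x \in I (inv g) -> y \in I (inv g) -> x <= y ->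
  phi g x <= phi g y.
Proof.
move=> xI yI /meet_idPl <-; rewrite pa_meet //; exact: leIr.
Qed.

Lemma pa_bot g : phi g \bot = \bot.
Proof.
have b0 : phi (inv g) \bot \in I (inv g) by apply: pa_mapV; apply: pa_ideal_bot.
have e : phi g (phi (inv g) \bot) = \bot by apply: pa_KV; apply: pa_ideal_bot.
have : phi g (\bot `&` phi (inv g) \bot) = phi g \bot `&` \bot.
  by rewrite pa_meet ?e //; apply: pa_ideal_bot.
by rewrite meet0x meetx0.
Qed.

Lemma pa_prod s t x : x \in I (inv s) -> x \in I t -> phi s x \in I (mul s t).
Proof.
move=> x1 x2; case: PA => _ _ _ H _.
by case: (proj2 (H s t (phi s x)) (ex_intro _ x (And3 x1 x2 erefl))).
Qed.

End PA.

Section Theta.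
Context {R : comPzRingType} {G : groupType} {d : Order.disp_t} {B : cbDistrLatticeType d}.
Variables (I : G -> pred B) (phi : G -> B -> B).
Hypothesis PA : partial_action predT I phi.
Notation inv := (@monoid.inv G).
Notation mul := (@monoid.mul G).

Lemma chi_mono (chi : B -> bool) a b : is_char chi -> a <= b -> chi a -> chi b.
Proof.
by case=> _ _ Hm _ /meet_idPl <-; rewrite Hm => /andP[].
Qed.

Lemma thetaP g (chi : B -> bool) V : reflect (exists W, [/\ W \in I g, chi W & phi (inv g) W <= V])
  (theta I phi (inv g) chi V).
Proof. rewrite /theta invK; exact: asboolP. Qed.

Lemma theta_char g U (chi : B -> bool) : U \in I g -> is_char chi -> chi U ->
  is_char (theta I phi (inv g) chi).
Proof.
move=> UI chiC chiU; have [c0 cU cI _] := chiC.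
have IT x : x \in (predT : pred B) by [].
split.
- apply/thetaP => -[W [WI cW]]; rewrite lex0 => /eqP e.
  have : W = \bot by rewrite -(pa_KV PA WI) e (pa_bot PA).
  by move=> eW; move: cW; rewrite eW c0.
- move=> x y; apply/idP/idP.
  + move/thetaP => [W [WI cW le]].
    set P := phi (inv g) W.
    have PI : P \in I (inv g) by apply: (pa_mapV PA).
    have eP : P = (P `&` x) `|` (P `&` y) by rewrite -meetUr; apply/esym/meet_idPl.
    have PxI : P `&` x \in I (inv g) by apply: (pa_ideal_meet PA).
    have PyI : P `&` y \in I (inv g) by apply: (pa_ideal_meet PA).
    have eW : W = phi g (P `&` x) `|` phi g (P `&` y).
      by rewrite -(pa_join PA) // -eP (pa_KV PA).
    move: cW; rewrite eW cU => /orP[c1|c2]; apply/orP; [left|right]; apply/thetaP.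
    * exists (phi g (P `&` x)); split => //; first exact: (pa_map PA).
      by rewrite (pa_VK PA) // leIr.
    * exists (phi g (P `&` y)); split => //; first exact: (pa_map PA).
      by rewrite (pa_VK PA) // leIr.
  + case/orP => /thetaP [W [WI cW le]]; apply/thetaP; exists W; split => //.
    * exact: le_trans le (leUl _ _).
    * exact: le_trans le (leUr _ _).
- move=> x y; apply/idP/idP.
  + move/thetaP => [W [WI cW le]]; apply/andP; split; apply/thetaP; exists W; split => //.
    * exact: le_trans le (leIl _ _).
    * exact: le_trans le (leIr _ _).
  + case/andP => /thetaP [W [WI cW le]] /thetaP [W' [WI' cW' le']].
    apply/thetaP; exists (W `&` W'); split.
    * exact: (pa_ideal_meet PA).
    * by rewrite cI cW cW'.
    * rewrite (pa_meet PA) ?invK //; exact: leI2.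
- exists (phi (inv g) U); apply/thetaP; exists U; split => //.
Qed.

Lemma theta_key g U V (chi : B -> bool) : U \in I g -> is_char chi ->
  (chi U && theta I phi (inv g) chi V) = chi (phi g (phi (inv g) U `&` V)).
Proof.
move=> UI chiC; have [c0 cU cI _] := chiC.
have PUI : phi (inv g) U \in I (inv g) by apply: (pa_mapV PA).
have XI : phi (inv g) U `&` V \in I (inv g) by apply: (pa_ideal_meet PA).
apply/idP/idP.
- case/andP => chU /thetaP [W [WI cW le]].
  have W'I : W `&` U \in I g by apply: (pa_ideal_meet PA).
  apply: (chi_mono chiC (a := W `&` U)); last by rewrite cI cW chU.
  rewrite -[W `&` U](pa_KV PA W'I); apply: (pa_mono PA) => //.
    exact: (pa_mapV PA).
  rewrite (pa_meet PA) ?invK // meetC; exact: leI2.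
- move=> cZ; have ZU : phi g (phi (inv g) U `&` V) <= U.
    rewrite -{2}(pa_KV PA UI); apply: (pa_mono PA) => //; exact: leIl.
  rewrite (chi_mono chiC ZU cZ) /=; apply/thetaP.
  exists (phi g (phi (inv g) U `&` V)); split => //; first exact: (pa_map PA).
  by rewrite (pa_VK PA) // leIr.
Qed.

End Theta.

Local Open Scope ring_scope.

Section CP.
Context {R : comPzRingType} {G : groupType} {d : Order.disp_t} {B : cbDistrLatticeType d}.
Variables (I : G -> pred B) (phi : G -> B -> B).
Hypothesis PA : partial_action predT I phi.
Notation inv := (@monoid.inv G).
Notation mul := (@monoid.mul G).
Notation cpf := (@cpfun R G d B).

Definition lc (s : seq (R * B * G)) : cpf :=
  fun k chi => \sum_(p <- s) p.1.1 * gen p.1.2 p.2 k chi.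

Lemma fsum_supp (f : G -> R) (r : seq G) : uniq r ->
  (forall g, g \notin r -> f g = 0) ->
  \sum_(g \in [set: G]) f g = \sum_(g <- r) f g.
Proof.
move=> ur H; rewrite (fsbigE r) //; last by move=> i _; apply: H.
by apply: eq_bigl => i; rewrite in_setT.
Qed.

Lemma gen_eq0 (U : B) (g k : G) chi : k != g -> gen (R:=R) U g k chi = 0.
Proof. by move=> /negbTE kg; rewrite /gen kg andbF. Qed.

Lemma cp_mul_genl U g (b : cpf) k chi :
  cp_mul I phi (gen (R:=R) U g) b k chi =
  if `[< is_char chi >] && chi U then b (mul (inv g) k) (theta I phi (inv g) chi) else 0.
Proof.
rewrite /cp_mul (fsum_supp (r := [:: g])) //; last first.
  by move=> g'; rewrite inE => ng; rewrite gen_eq0 ?mul0r.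
rewrite big_seq1 /gen eqxx andbT; case: ifP => _; by rewrite ?mul1r ?mul0r.
Qed.

Lemma cp_mul_suml s (b : cpf) k chi :
  cp_mul I phi (lc s) b k chi = \sum_(p <- s) p.1.1 * cp_mul I phi (gen (R:=R) p.1.2 p.2) b k chi.
Proof.
set r := undup (map snd s).
have supp p g : p \in s -> g \notin r -> gen (R:=R) p.1.2 p.2 g chi = 0.
  move=> ps gr; rewrite gen_eq0 //; apply: (contraNneq _ gr) => e.
  by rewrite mem_undup; apply/mapP; exists p.
rewrite /cp_mul (fsum_supp (r := r)) ?undup_uniq //; last first.
  move=> g gr; rewrite /lc big_seq big1 ?mul0r // => p ps.
  by rewrite supp ?mulr0.
transitivity (\sum_(g <- r) \sum_(p <- s) p.1.1 * (gen p.1.2 p.2 g chi *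
   b (mul (inv g) k) (theta I phi (inv g) chi))).
  by apply: eq_bigr => g _; rewrite /lc big_distrl; apply: eq_bigr => p _; rewrite mulrA.
rewrite exchange_big [LHS]big_seq [RHS]big_seq; apply: eq_bigr => p ps.
rewrite -big_distrr /= (fsum_supp (r := r)) ?undup_uniq //.
by move=> g gr; rewrite supp ?mul0r.
Qed.

Lemma cp_mul_sumr U g s k chi :
  cp_mul I phi (gen (R:=R) U g) (lc s) k chi =
  \sum_(p <- s) p.1.1 * cp_mul I phi (gen (R:=R) U g) (gen p.1.2 p.2) k chi.
Proof.
rewrite cp_mul_genl; under eq_bigr do rewrite cp_mul_genl.
case: ifP => _ //; rewrite big1 // => p _; by rewrite mulr0.
Qed.

Lemma gen_mul U g V h : U \in I g -> V \in I h -> forall k chi,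
  cp_mul I phi (gen (R:=R) U g) (gen V h) k chi =
  gen (R:=R) (phi g (phi (inv g) U `&` V)) (mul g h) k chi.
Proof.
move=> UI VI k chi; rewrite cp_mul_genl /gen.
case: (asboolP (is_char chi)) => [chiC|_] //=.
rewrite -(theta_key PA V UI chiC).
have eq : (mul (inv g) k == h) = (k == mul g h).
  apply/eqP/eqP => [<-|->]; by rewrite ?monoid.mulVKg ?monoid.mulKg.
case cU: (chi U) => /=; last by rewrite andbF.
by rewrite (asboolT (theta_char PA UI chiC cU)) /= eq.
Qed.

Lemma mem_Z U g V h : U \in I g -> V \in I h ->
  phi g (phi (inv g) U `&` V) \in I (mul g h).
Proof.
move=> UI VI; apply: (pa_prod PA).
  by apply: (pa_ideal_meet PA) => //; apply: (pa_mapV PA).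
by rewrite meetC; apply: (pa_ideal_meet PA).
Qed.

Definition Zt (q p : R * B * G) : R * B * G :=
  (q.1.1 * p.1.1, phi q.2 (phi (inv q.2) q.1.2 `&` p.1.2), mul q.2 p.2).

Lemma cp_mul_lc t s :
  (forall q, q \in t -> q.1.2 \in I q.2) ->
  (forall p, p \in s -> p.1.2 \in I p.2) ->
  cp_mul I phi (lc t) (lc s) = lc [seq Zt q p | q <- t, p <- s].
Proof.
move=> Ht Hs; apply: funext => k; apply: funext => chi.
rewrite cp_mul_suml /lc big_allpairs_dep [LHS]big_seq [RHS]big_seq.
apply: eq_bigr => q qt; rewrite cp_mul_sumr big_distrr /= big_seq [RHS]big_seq.
apply: eq_bigr => p ps; rewrite (gen_mul (Ht q qt) (Hs p ps)); exact: mulrA.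
Qed.

End CP.

Unset Implicit Arguments.
Unset Strict Implicit.

Theorem lemma4p10 (R : comPzRingType) (G : groupType) (d : Order.disp_t)
  (B : cbDistrLatticeType d)
  (B1 : pred B) (I1 I2 : G -> pred B) (phi : G -> B -> B) :
  (* (B1, Phi1) is a partial subaction of (B, Phi2), Phi1 = restriction *)
  sub_gba B1 ->
  partial_action predT I2 phi ->
  partial_action B1 I1 phi ->
  (forall t, {subset I1 t <= I2 t}) ->
  (* B1 is an ideal of B2 and I_{1,g} = B1 /\ I_{2,g} *)
  gba_ideal predT B1 ->
  (forall g x, (x \in I1 g) = (x \in B1) && (x \in I2 g)) ->
  two_sided_ideal (in_cp (R:=R) I2) (in_cp (R:=R) I1) (cp_mul I2 phi).
Proof.
move=> _ PA2 PA1 sub12 HB1 hI.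
have B1m (x y : B) : x \in B1 -> x `&` y \in B1.
  by case: HB1 => _ _ _ H xB; apply: H.
have mkI1 g (x : B) : x \in B1 -> x \in I2 g -> x \in I1 g by move=> a b; rewrite hI a b.
have I1B1 g (x : B) : x \in I1 g -> x \in B1 by rewrite hI => /andP[].
split.
- move=> x [s [Hs ->]]; exists s; split => // p ps; exact: sub12 (Hs p ps).
- exists [::]; split => //; apply: funext => k; apply: funext => chi.
  by rewrite big_nil.
- move=> x y [s [Hs ->]] [t [Ht ->]]; exists (s ++ t); split.
    by move=> p; rewrite mem_cat => /orP[]; [apply: Hs | apply: Ht].
  by apply: funext => k; apply: funext => chi; rewrite big_cat.
- move=> x [s [Hs ->]]; exists [seq (- p.1.1, p.1.2, p.2) | p <- s]; split.
    move=> p /mapP [q qs ->]; exact: (Hs q qs).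
  apply: funext => k; apply: funext => chi; rewrite /cp_opp big_map -sumrN.
  by apply: eq_bigr => p _; rewrite mulNr.
- move=> x y [s [Hs ->]] [t [Ht ->]].
  have Hs2 p : p \in s -> p.1.2 \in I2 p.2 by move=> ps; apply: sub12; apply: Hs.
  split.
  + exists [seq Zt phi q p | q <- t, p <- s]; split; last first.
      exact: (cp_mul_lc PA2 Ht Hs2).
    move=> z /allpairsP [[q p] [/= qt ps ->]] /=.
    have UI := Ht q qt; have VI := Hs p ps.
    apply: (pa_prod PA1); apply: mkI1.
    * by rewrite meetC; apply: B1m; apply: I1B1 VI.
    * by apply: (pa_ideal_meet PA2) => //; apply: (pa_mapV PA2).
    * by rewrite meetC; apply: B1m; apply: I1B1 VI.
    * by rewrite meetC; apply: (pa_ideal_meet PA2) => //; apply: sub12.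
  + exists [seq Zt phi q p | q <- s, p <- t]; split; last first.
      exact: (cp_mul_lc PA2 Hs2 Ht).
    move=> z /allpairsP [[q p] [/= qs pt ->]] /=.
    have UI := Hs q qs; have VI := Ht p pt.
    have PB : phi (monoid.inv q.2) q.1.2 \in B1 by apply: I1B1 (pa_mapV PA1 UI).
    apply: (pa_prod PA1); apply: mkI1.
    * by apply: B1m.
    * by apply: (pa_ideal_meet PA2) => //; apply: (pa_mapV PA2); apply: sub12.
    * by apply: B1m.
    * by rewrite meetC; apply: (pa_ideal_meet PA2).
Qed.
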